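(* For $z\in\mathbb R$ let \[p_1(z)=-7+30z-24z^2-14z^3+12z^4-6z^5+2z^6,\] \[p_2(z)=81-324z+1188z^2-1404z^3-216z^4+1404z^5-972z^6+432z^7-108z^8,\] \[\mathcal Q(z)=\frac13(z^2-z+1)-\frac{\sqrt[3]{2}\,(3-(z^2-z+1)^2)}{3\sqrt[3]{p_1(z)+\sqrt{p_2(z)}}}+\frac{\sqrt[3]{p_1(z)+\sqrt{p_2(z)}}}{3\sqrt[3]{2}}.\] If $v\in(0.35,1/2)$, then $\mathcal Q(v)<4v/5$. If $v\in[0.22,0.35]$, then $\mathcal Q(v)<9v/10$. *)

(* Defs.v *)
From Stdlib Require Import Reals.
Open Scope R_scope.

Definition cbrt (x : R) : R :=
  if Rlt_dec 0 x then Rpower x (1/3)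
  else if Rlt_dec x 0 then - Rpower (- x) (1/3)
  else 0.

Definition p1 (z : R) : R :=
  -7 + 30*z - 24*z^2 - 14*z^3 + 12*z^4 - 6*z^5 + 2*z^6.

Definition p2 (z : R) : R :=
  81 - 324*z + 1188*z^2 - 1404*z^3 - 216*z^4 + 1404*z^5
  - 972*z^6 + 432*z^7 - 108*z^8.

Definition Qf (z : R) : R :=
  (1/3) * (z^2 - z + 1)
  - (cbrt 2 * (3 - (z^2 - z + 1)^2)) / (3 * cbrt (p1 z + sqrt (p2 z)))
  + cbrt (p1 z + sqrt (p2 z)) / (3 * cbrt 2).

(* Main.v *)
Require Import Defs.
From Stdlib Require Import Reals.
From Stdlib Require Import Lra Psatz.
Open Scope R_scope.

Lemma h1 (v:R) : 35/100 < v < 1/2 ->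
 let a := v^2 - v + 1 in let b := 3*(4/5)*v - a in
 b^3 + 3*(3-a^2)*b - (-7 + 30*v - 24*v^2 - 14*v^3 + 12*v^4 - 6*v^5 + 2*v^6) > 0.
Proof. intros H a b. unfold b, a. nra. Qed.
Lemma h2 (v:R) : 22/100 <= v <= 35/100 ->
 let a := v^2 - v + 1 in let b := 3*(9/10)*v - a in
 b^3 + 3*(3-a^2)*b - (-7 + 30*v - 24*v^2 - 14*v^3 + 12*v^4 - 6*v^5 + 2*v^6) > 0.
Proof. intros H a b. unfold b, a. nra. Qed.

Lemma cbrt_pos_cube (x : R) : 0 < x -> 0 < cbrt x /\ cbrt x ^ 3 = x.
Proof.
  intro Hx. unfold cbrt. destruct (Rlt_dec 0 x) as [_|n]; [|lra].
  split.
  - unfold Rpower. apply exp_pos.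
  - rewrite <- Rpower_pow by (unfold Rpower; apply exp_pos).
    rewrite Rpower_mult. replace (1/3 * INR 3) with 1 by (simpl; field).
    apply Rpower_1; exact Hx.
Qed.

Lemma key (v k : R) : 0 < v < 1 ->
  let a := v^2 - v + 1 in let b := 3*k*v - a in
  b^3 + 3*(3-a^2)*b - p1 v > 0 -> Qf v < k * v.
Proof.
  intros Hv a b Hg.
  set (m := 3 - a^2).
  assert (Ha : 0 < a <= 1) by (unfold a; nra).
  assert (Hm : 0 < m) by (unfold m; nra).
  assert (Hp2 : p2 v = p1 v ^ 2 + 4 * m^3) by (unfold m, a, p1, p2; ring).
  set (s := sqrt (p2 v)).
  assert (Hs0 : 0 <= s) by apply sqrt_pos.
  assert (Hs2 : s * s = p2 v).
  { apply sqrt_sqrt. rewrite Hp2. nra. }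
  assert (HX : 0 < p1 v + s).
  { assert (Hm3 : 0 < m^3) by (apply pow_lt; lra). nra. }
  destruct (cbrt_pos_cube _ HX) as [HC HC3].
  assert (H2 : 0 < 2) by lra.
  destruct (cbrt_pos_cube _ H2) as [HD HD3].
  set (C := cbrt (p1 v + s)) in *.
  set (D := cbrt 2) in *.
  set (t := C / D).
  assert (Ht : 0 < t) by (unfold t; apply Rdiv_lt_0_compat; lra).
  assert (Ht3 : t^3 = (p1 v + s)/2).
  { unfold t. rewrite <- HC3, <- HD3. field. lra. }
  set (y := t - m / t).
  assert (HQ : Qf v = (a + y) / 3).
  { unfold Qf, y, t. fold s. fold C. fold D. unfold m, a. field. split; lra. }
  assert (Hy : y^3 + 3*m*y = p1 v).
  { assert (E : y^3 + 3*m*y = t^3 - m^3 / t^3) by (unfold y; field; lra).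
    rewrite E, Ht3.
    assert (Hs2' : s*s - p1 v ^ 2 = 4*m^3) by (rewrite Hs2, Hp2; ring).
    replace (m^3) with ((s*s - p1 v ^ 2)/4) by lra.
    field. lra. }
  rewrite HQ.
  destruct (Rlt_or_le y b) as [Hyb|Hyb].
  - unfold b in Hyb. lra.
  - exfalso.
    fold m in Hg.
    assert (Hpos : 0 < y^2 + y*b + b^2 + 3*m) by nra.
    assert (0 <= (y - b) * (y^2 + y*b + b^2 + 3*m)) by (apply Rmult_le_pos; lra).
    nra.
Qed.

Theorem lemma4p3 :
  (forall v : R, 35/100 < v < 1/2 -> Qf v < 4 * v / 5) /\
  (forall v : R, 22/100 <= v <= 35/100 -> Qf v < 9 * v / 10).
Proof.
  split; intros v Hv.
  - replace (4 * v / 5) with ((4/5) * v) by field.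
    apply key; [lra|]. apply h1; exact Hv.
  - replace (9 * v / 10) with ((9/10) * v) by field.
    apply key; [lra|]. apply h2; exact Hv.
Qed.
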